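(* Let $d\ge1$. Every $d$-dimensional lattice polytope $P\subseteq\mathbb{R}^d$ with $\mathrm{width}(P)\ge 2\,\mathrm{Flt}(d)\,d$ is spanning.
   Context: A lattice polytope is the convex hull of finitely many points of $\mathbb{Z}^d$. It is spanning if every point of $\mathbb{Z}^d$ is an affine integral combination of lattice points of $P$. $\mathrm{width}(P)=\min_{u\in(\mathbb{Z}^d)^*\setminus\{0\}}\max_{x,y\in P}|u(x)-u(y)|$, and $\mathrm{Flt}(d)=\sup\{\mathrm{width}(K): K\subseteq\mathbb{R}^d \text{ non-empty compact convex}, K\cap\mathbb{Z}^d=\emptyset\}$. *)

(* Defs.v *)
From mathcomp Require Import all_boot.
From Stdlib Require Import Reals ZArith.
Set Implicit Arguments. Unset Strict Implicit. Unset Printing Implicit Defensive.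

Local Open Scope R_scope.

Definition rpoint (d : nat) := 'I_d -> R.
Definition zpoint (d : nat) := 'I_d -> Z.

Definition zvec (d : nat) (z : zpoint d) : rpoint d := fun i => IZR (z i).

Definition is_lattice_point (d : nat) (x : rpoint d) : Prop :=
  exists z : zpoint d, forall i, x i = IZR (z i).

Definition lfun (d : nat) (u : zpoint d) (x : rpoint d) : R :=
  \big[Rplus/0]_(i < d) (IZR (u i) * x i).

Definition nonzero_zvec (d : nat) (u : zpoint d) : Prop := exists i, u i <> 0%Z.

Definition is_max (S : R -> Prop) (m : R) : Prop := S m /\ forall s, S s -> s <= m.
Definition is_min (S : R -> Prop) (m : R) : Prop := S m /\ forall s, S s -> m <= s.

Definition dir_width (d : nat) (K : rpoint d -> Prop) (u : zpoint d) (w : R) : Prop :=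
  is_max (fun s => exists x y, K x /\ K y /\ s = Rabs (lfun u x - lfun u y)) w.

Definition is_width (d : nat) (K : rpoint d -> Prop) (w : R) : Prop :=
  is_min (fun s => exists u, nonzero_zvec u /\ dir_width K u s) w.

Definition bounded_set (d : nat) (K : rpoint d -> Prop) : Prop :=
  exists M, forall x, K x -> forall i, Rabs (x i) <= M.

Definition closed_set (d : nat) (K : rpoint d -> Prop) : Prop :=
  forall (s : nat -> rpoint d) (x : rpoint d),
    (forall n, K (s n)) -> (forall i, Un_cv (fun n => s n i) (x i)) -> K x.

Definition convex_set (d : nat) (K : rpoint d -> Prop) : Prop :=
  forall x y t, K x -> K y -> 0 <= t <= 1 ->
    K (fun i => t * x i + (1 - t) * y i).

Definition nonempty_set (d : nat) (K : rpoint d -> Prop) : Prop := exists x, K x.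

Definition Flt_set (d : nat) (w : R) : Prop :=
  exists K : rpoint d -> Prop,
    nonempty_set K /\ closed_set K /\ bounded_set K /\ convex_set K /\
    (forall x, K x -> ~ is_lattice_point x) /\ is_width K w.

(* f = Flt(d) = sup Flt_set d (as a finite least upper bound) *)
Definition is_Flt (d : nat) (f : R) : Prop := is_lub (Flt_set d) f.

Definition conv_hull (d : nat) (V : seq (zpoint d)) (x : rpoint d) : Prop :=
  exists lam : nat -> R,
    (forall j, 0 <= lam j) /\
    \big[Rplus/0]_(j < size V) lam j = 1 /\
    forall i, x i = \big[Rplus/0]_(j < size V) (lam j * IZR (nth (fun _ => 0%Z) V j i)).

Definition full_dim (d : nat) (P : rpoint d -> Prop) : Prop :=
  forall a : rpoint d,
    (forall x y, P x -> P y ->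
       \big[Rplus/0]_(i < d) (a i * x i) = \big[Rplus/0]_(i < d) (a i * y i)) ->
    forall i, a i = 0.

Definition spanning (d : nat) (P : rpoint d -> Prop) : Prop :=
  forall z : zpoint d,
    exists L : seq (Z * zpoint d),
      (forall q, List.In q L -> P (zvec q.2)) /\
      \big[Z.add/0%Z]_(q <- L) q.1 = 1%Z /\
      forall i, z i = \big[Z.add/0%Z]_(q <- L) (q.1 * q.2 i)%Z.

(* Main.v *)
Require Import Defs.
From mathcomp Require Import all_boot all_algebra.
From mathcomp Require Import Rstruct.
From Stdlib Require Import Reals ZArith Lra Lia.
From Stdlib Require Import ClassicalEpsilon Classical.
Set Implicit Arguments. Unset Strict Implicit. Unset Printing Implicit Defensive.
Local Open Scope R_scope.


Lemma sumR_affine n (u : nat -> R) (a : R) (x s : nat -> R) :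
  \big[Rplus/0]_(i < n) (u i * (a * x i + s i)) =
  a * \big[Rplus/0]_(i < n) (u i * x i) + \big[Rplus/0]_(i < n) (u i * s i).
Proof.
rewrite big_distrr /= -big_split /=; apply: eq_bigr => i _; ring.
Qed.

Lemma sum_ge0 (I : Type) (r : seq I) (P : pred I) (F : I -> R) :
  (forall i, P i -> 0 <= F i) -> 0 <= \big[Rplus/0]_(i <- r | P i) F i.
Proof. move=> H; apply: big_ind => //; [lra | move=> *; lra]. Qed.

Lemma sum_le (I : Type) (r : seq I) (P : pred I) (F G : I -> R) :
  (forall i, P i -> F i <= G i) ->
  \big[Rplus/0]_(i <- r | P i) F i <= \big[Rplus/0]_(i <- r | P i) G i.
Proof. move=> H; apply: (big_ind2 (fun a b => a <= b)) => //; [lra | move=> *; lra]. Qed.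

Lemma sum_abs_le (I : Type) (r : seq I) (P : pred I) (F : I -> R) :
  Rabs (\big[Rplus/0]_(i <- r | P i) F i) <= \big[Rplus/0]_(i <- r | P i) Rabs (F i).
Proof.
apply: (big_ind2 (fun a b => Rabs a <= b)).
- rewrite Rabs_R0; lra.
- move=> a b c e H1 H2; have := Rabs_triang a c; lra.
- move=> *; lra.
Qed.

Lemma term_le_sum n (F : 'I_n -> R) (j : 'I_n) :
  (forall i, 0 <= F i) -> F j <= \big[Rplus/0]_(i < n) F i.
Proof.
move=> H; rewrite (bigD1 j) //=.
rewrite -{1}[F j]Rplus_0_r; apply: Rplus_le_compat_l; apply: sum_ge0 => i _; exact: H.
Qed.

Definition vtx d (V : seq (zpoint d)) (j : nat) : zpoint d := nth (fun _ => 0%Z) V j.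

Lemma conv_ext d (V : seq (zpoint d)) x y :
  (forall i, x i = y i) -> conv_hull V x -> conv_hull V y.
Proof.
move=> E [l [h1 [h2 h3]]]; exists l; split => //; split => // i; rewrite -E; exact: h3.
Qed.

Lemma conv_convex d (V : seq (zpoint d)) : convex_set (conv_hull V).
Proof.
move=> x y t [l1 [h1 [s1 e1]]] [l2 [h2 [s2 e2]]] ht.
exists (fun j => t * l1 j + (1-t) * l2 j); split; [|split].
- move=> j; have:=h1 j; have:=h2 j; nra.
- rewrite big_split /= -!big_distrr /= s1 s2; ring.
- move=> i; rewrite e1 e2 !big_distrr /= -big_split /=; apply: eq_bigr => j _; ring.
Qed.

Lemma conv_vertex d (V : seq (zpoint d)) j :
  (j < size V)%nat -> conv_hull V (zvec (vtx V j)).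
Proof.
move=> Hj.
exists (fun k => if k == j then 1 else 0); split; [|split].
- move=> k; case: (k == j); lra.
- rewrite (bigD1 (Ordinal Hj)) //= eqxx big1 ?Rplus_0_r // => k Hk.
  case: eqP => // E; case/negP: Hk; apply/eqP/val_inj => //.
- move=> i; rewrite (bigD1 (Ordinal Hj)) //= eqxx big1 ?Rplus_0_r; first by rewrite Rmult_1_l.
  move=> k Hk; case: eqP => E; last by rewrite Rmult_0_l.
  by case/negP: Hk; apply/eqP/val_inj.
Qed.

Lemma conv_lam_le1 d (V : seq (zpoint d)) (l : nat -> R) (j : 'I_(size V)) :
  (forall j, 0 <= l j) -> \big[Rplus/0]_(j < size V) l j = 1 -> l j <= 1.
Proof. move=> H1 H2; rewrite -H2; exact: (@term_le_sum _ (fun k : 'I_(size V) => l k) j (fun k => H1 k)). Qed.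

Lemma conv_bounded d (V : seq (zpoint d)) : bounded_set (conv_hull V).
Proof.
exists (\big[Rplus/0]_(j < size V) \big[Rplus/0]_(i < d) Rabs (IZR (vtx V j i))).
move=> x [l [h1 [h2 h3]]] i; rewrite h3.
eapply Rle_trans; [apply: sum_abs_le|]; apply: sum_le => j _.
rewrite Rabs_mult Rabs_pos_eq //.
have := conv_lam_le1 j h1 h2.
have := @term_le_sum _ (fun i => Rabs (IZR (vtx V j i))) i (fun _ => Rabs_pos _).
have := Rabs_pos (IZR (nth (fun=> 0%Z) V j i)).
rewrite /vtx; move=> *; nra.
Qed.


Definition incr (f : nat -> nat) := forall n, (f n < f n.+1)%nat.

Lemma incr_lt f : incr f -> forall a b, (a < b)%nat -> (f a < f b)%nat.
Proof.
move=> H a b; elim: b => // b IH; rewrite ltnS leq_eqVlt => /orP [/eqP -> | Hab] //.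
exact: ltn_trans (IH Hab) (H b).
Qed.

Lemma incr_ge f : incr f -> forall n, (n <= f n)%nat.
Proof. move=> H; elim=> // n IH; exact: leq_ltn_trans IH (H n). Qed.

Lemma incr_comp f g : incr f -> incr g -> incr (fun n => f (g n)).
Proof. move=> Hf Hg n; exact: incr_lt Hf _ _ (Hg n). Qed.

Lemma cv_sub u l phi : incr phi -> Un_cv u l -> Un_cv (fun n => u (phi n)) l.
Proof.
move=> Hp H eps He; case: (H eps He) => N HN; exists N => n Hn; apply: HN.
have := incr_ge Hp n; move/leP => ?; lia.
Qed.

Lemma cv_const c : Un_cv (fun _ => c) c.
Proof. move=> eps He; exists 0%nat => n _; rewrite /R_dist Rminus_diag_eq // Rabs_R0 //. Qed.

Lemma cv_ext u v l : (forall n, u n = v n) -> Un_cv u l -> Un_cv v l.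
Proof. move=> E H eps He; case: (H eps He) => N HN; exists N => n Hn; rewrite -E; exact: HN. Qed.

Lemma cv_nonneg u l : (forall n, 0 <= u n) -> Un_cv u l -> 0 <= l.
Proof.
move=> H Hc; apply: Rnot_lt_le => Hl.
case: (Hc (- l)); first lra.
move=> N HN; have := HN N (le_n _); have := H N; rewrite /R_dist.
move=> H1 H2; have := Rle_abs (u N - l); lra.
Qed.

Lemma cv_sum n (F : nat -> nat -> R) (L : nat -> R) :
  (forall j, (j < n)%nat -> Un_cv (fun k => F k j) (L j)) ->
  Un_cv (fun k => \big[Rplus/0]_(j < n) F k j) (\big[Rplus/0]_(j < n) L j).
Proof.
elim: n => [|n IH] H.
  rewrite big_ord0; apply: cv_ext (cv_const 0) => k; by rewrite big_ord0.
rewrite big_ord_recr /=.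
apply: cv_ext (CV_plus _ _ _ _ (IH _) (H n _)) => //.
- by move=> k; rewrite big_ord_recr.
- by move=> j Hj; apply: H; exact: ltn_trans Hj _.
Qed.

Lemma bw_sub (u : nat -> R) : (forall n, 0 <= u n <= 1) ->
  exists phi l, incr phi /\ Un_cv (fun n => u (phi n)) l.
Proof.
move=> Hu.
case: (@Bolzano_Weierstrass u (fun c => 0 <= c <= 1) (compact_P3 0 1) Hu) => l Hl.
have H : forall N k : nat, exists p, (N <= p)%nat /\ Rabs (u p - l) < / (INR k + 1).
  move=> N k.
  have Hpos : 0 < / (INR k + 1) by apply: Rinv_0_lt_compat; have := pos_INR k; lra.
  case: (Hl (fun y => Rabs (y - l) < / (INR k + 1)) N).
    exists (mkposreal (/ (INR k + 1)) Hpos) => y; by rewrite /disc /=.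
  move=> p [Hp1 Hp2]; exists p; split => //; exact/leP.
pose g N k := proj1_sig (constructive_indefinite_description _ (H N k)).
have Hg : forall N k, (N <= g N k)%nat /\ Rabs (u (g N k) - l) < / (INR k + 1).
  move=> N k; exact: (proj2_sig (constructive_indefinite_description _ (H N k))).
pose phi := fix phi n := match n with 0 => g 0%nat 0%nat | S m => g (S (phi m)) (S m) end.
have Hphi : forall n, Rabs (u (phi n) - l) < / (INR n + 1).
  case=> [|n]; [exact: (proj2 (Hg 0%nat 0%nat)) | exact: (proj2 (Hg (S (phi n)) (S n)))].
exists phi, l; split.
  move=> n; exact: (proj1 (Hg (S (phi n)) (S n))).
move=> eps He; case: (archimed_cor1 eps He) => N [HN1 HN2].
exists N => n Hn; rewrite /R_dist.
apply: Rlt_trans (Hphi n) _; apply: Rle_lt_trans _ HN1.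
apply: Rinv_le_contravar; first exact: lt_0_INR.
have := le_INR _ _ Hn; lra.
Qed.

Lemma bw_multi m (lam : nat -> nat -> R) :
  (forall n j, (j < m)%nat -> 0 <= lam n j <= 1) ->
  exists phi (l : nat -> R), incr phi /\
    forall j, (j < m)%nat -> Un_cv (fun n => lam (phi n) j) (l j).
Proof.
elim: m => [|m IH] H.
  by exists (fun n : nat => n), (fun _ => 0); split => // n.
case: IH => [n j Hj|phi [l [Hp Hl]]]; first by apply: H; exact: ltn_trans Hj _.
case: (@bw_sub (fun n => lam (phi n) m)) => [n|psi [l' [Hps Hl']]]; first exact: H.
exists (fun n => phi (psi n)), (fun j => if j == m then l' else l j); split.
  exact: incr_comp.
move=> j; rewrite ltnS leq_eqVlt => /orP [/eqP -> | Hj].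
  by rewrite eqxx.
rewrite (ltn_eqF Hj); exact: (cv_sub Hps (Hl j Hj)).
Qed.

Lemma conv_closed d (V : seq (zpoint d)) : Defs.closed_set (conv_hull V).
Proof.
move=> s x Hs Hcv.
pose lam n := proj1_sig (constructive_indefinite_description _ (Hs n)).
have Hlam : forall n, (forall j, 0 <= lam n j) /\
    \big[Rplus/0]_(j < size V) lam n j = 1 /\
    forall i, s n i = \big[Rplus/0]_(j < size V) (lam n j * IZR (nth (fun _ => 0%Z) V j i)).
  move=> n; exact: (proj2_sig (constructive_indefinite_description _ (Hs n))).
case: (@bw_multi (size V) lam) => [n j Hj|phi [l [Hp Hl]]].
  case: (Hlam n) => [h1 [h2 _]]; split => //.
  exact: (conv_lam_le1 (Ordinal Hj) h1 h2).
have Hl0 : forall j, (j < size V)%nat -> 0 <= l j.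
  move=> j Hj; apply: cv_nonneg (Hl j Hj) => n; by case: (Hlam (phi n)).
exists (fun j => if (j < size V)%nat then l j else 0); split; [|split].
- move=> j; case: ifP => Hj; [exact: Hl0 | lra].
- have E : \big[Rplus/0]_(j < size V) (if (j < size V)%nat then l j else 0) =
           \big[Rplus/0]_(j < size V) l j.
    by apply: eq_bigr => j _; rewrite ltn_ord.
  rewrite E; apply: (UL_sequence (fun n => \big[Rplus/0]_(j < size V) lam (phi n) j)).
    exact: (@cv_sum (size V) (fun n j => lam (phi n) j) l Hl).
  apply: cv_ext (cv_const 1) => n; by case: (Hlam (phi n)) => [_ [-> _]].
- move=> i.
  have E : \big[Rplus/0]_(j < size V) ((if (j < size V)%nat then l j else 0) * IZR (nth (fun=> 0%Z) V j i)) =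
           \big[Rplus/0]_(j < size V) (l j * IZR (nth (fun=> 0%Z) V j i)).
    by apply: eq_bigr => j _; rewrite ltn_ord.
  rewrite E; apply: (UL_sequence (fun n => s (phi n) i)).
    exact: cv_sub Hp (Hcv i).
  apply: (@cv_ext (fun n => \big[Rplus/0]_(j < size V) (lam (phi n) j * IZR (nth (fun=> 0%Z) V j i)))).
    by move=> n /=; case: (Hlam (phi n)) => [_ [_ ->]].
  apply: (@cv_sum (size V) (fun n j => lam (phi n) j * IZR (nth (fun=> 0%Z) V j i)) (fun j => l j * IZR (nth (fun=> 0%Z) V j i))) => j Hj.
  exact: CV_mult (Hl j Hj) (cv_const _).
Qed.


Definition img d (P : rpoint d -> Prop) (a : R) (s : rpoint d) : rpoint d -> Prop :=
  fun x => exists p, P p /\ forall i, x i = a * p i + s i.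

Lemma lfun_img d (u : zpoint d) (x p s : rpoint d) a :
  (forall i, x i = a * p i + s i) -> lfun u x = a * lfun u p + lfun u s.
Proof.
move=> E; rewrite /lfun big_distrr /= -big_split /=; apply: eq_bigr => i _; rewrite E; ring.
Qed.

Lemma dirw_img d (P : rpoint d -> Prop) u w a s :
  0 < a -> dir_width P u w -> dir_width (img P a s) u (a * w).
Proof.
move=> Ha [[x [y [Hx [Hy Hw]]]] Hub]; split.
- exists (fun i => a * x i + s i), (fun i => a * y i + s i); split; [|split].
  + by exists x.
  + by exists y.
  + rewrite (@lfun_img _ u (fun i => a * x i + s i) x s a) //.
    rewrite (@lfun_img _ u (fun i => a * y i + s i) y s a) // Hw.
    replace (a * lfun u x + lfun u s - (a * lfun u y + lfun u s)) with (a * (lfun u x - lfun u y)) by ring.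
    rewrite Rabs_mult (Rabs_pos_eq a) //; lra.
- move=> v [x' [y' [[p [Hp Ep]] [[q [Hq Eq]] ->]]]].
  rewrite (lfun_img u Ep) (lfun_img u Eq).
  replace (a * lfun u p + lfun u s - (a * lfun u q + lfun u s)) with (a * (lfun u p - lfun u q)) by ring.
  rewrite Rabs_mult Rabs_pos_eq; last lra.
  have := Hub (Rabs (lfun u p - lfun u q)) (ex_intro _ p (ex_intro _ q (conj Hp (conj Hq erefl)))).
  nra.
Qed.

Lemma dirw_img_inv d (P : rpoint d -> Prop) u w a s :
  0 < a -> dir_width (img P a s) u w -> dir_width P u (w / a).
Proof.
move=> Ha [[x' [y' [[p [Hp Ep]] [[q [Hq Eq]] Hw]]]] Hub]; split.
- exists p, q; split => //; split => //.
  rewrite Hw (lfun_img u Ep) (lfun_img u Eq).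
  replace (a * lfun u p + lfun u s - (a * lfun u q + lfun u s)) with (a * (lfun u p - lfun u q)) by ring.
  rewrite Rabs_mult Rabs_pos_eq; last lra.
  field; lra.
- move=> v [x [y [Hx [Hy ->]]]].
  have H1 : img P a s (fun i => a * x i + s i) by exists x.
  have H2 : img P a s (fun i => a * y i + s i) by exists y.
  have := Hub _ (ex_intro _ _ (ex_intro _ _ (conj H1 (conj H2 erefl)))).
  rewrite (@lfun_img _ u (fun i => a * x i + s i) x s a) //.
  rewrite (@lfun_img _ u (fun i => a * y i + s i) y s a) //.
  replace (a * lfun u x + lfun u s - (a * lfun u y + lfun u s)) with (a * (lfun u x - lfun u y)) by ring.
  rewrite Rabs_mult Rabs_pos_eq; last lra.
  move=> H; apply: (Rmult_le_reg_l a) => //.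
  replace (a * (w / a)) with w by (field; lra); lra.
Qed.

Lemma width_img d (P : rpoint d -> Prop) w a s :
  0 < a -> is_width P w -> is_width (img P a s) (a * w).
Proof.
move=> Ha [[u [Hu Hd]] Hmin]; split.
  exists u; split => //; exact: dirw_img.
move=> v [u' [Hu' Hd']].
have := Hmin (v / a) (ex_intro _ u' (conj Hu' (dirw_img_inv Ha Hd'))).
move=> H; apply: (Rmult_le_reg_l (/ a)); first exact: Rinv_0_lt_compat.
replace (/ a * (a * w)) with w by (field; lra).
replace (/ a * v) with (v / a) by (field; lra); lra.
Qed.

Lemma img_ext d (P : rpoint d -> Prop) a s x y :
  (forall i, x i = y i) -> img P a s x -> img P a s y.
Proof. move=> E [p [Hp Ep]]; exists p; split => // i; rewrite -E; exact: Ep. Qed.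

Lemma img_convex d (P : rpoint d -> Prop) a s :
  convex_set P -> (forall x y, (forall i, x i = y i) -> P x -> P y) ->
  convex_set (img P a s).
Proof.
move=> Hc He x y t [p [Hp Ep]] [q [Hq Eq]] Ht.
exists (fun i => t * p i + (1 - t) * q i); split; first exact: Hc.
move=> i /=; rewrite Ep Eq; ring.
Qed.

Lemma img_closed d (P : rpoint d -> Prop) a s :
  0 < a -> Defs.closed_set P -> (forall x y, (forall i, x i = y i) -> P x -> P y) ->
  Defs.closed_set (img P a s).
Proof.
move=> Ha Hc He sq x Hs Hcv.
exists (fun i => (x i - s i) / a); split; last by move=> i; field; lra.
apply: (Hc (fun n i => (sq n i - s i) / a)).
  move=> n; case: (Hs n) => p [Hp Ep]; apply: He Hp => i; rewrite Ep; field; lra.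
move=> i.
have H1 := CV_minus _ _ _ _ (Hcv i) (cv_const (s i)).
have H2 := CV_mult _ _ _ _ H1 (cv_const (/ a)).
exact: H2.
Qed.

Lemma img_bounded d (P : rpoint d -> Prop) a s :
  0 < a -> bounded_set P -> bounded_set (img P a s).
Proof.
move=> Ha [M HM]; exists (a * M + \big[Rplus/0]_(i < d) Rabs (s i)).
move=> x [p [Hp Ep]] i; rewrite Ep.
have H1 := HM p Hp i.
have H2 := @term_le_sum _ (fun i => Rabs (s i)) i (fun _ => Rabs_pos _).
have H3 := Rabs_triang (a * p i) (s i).
rewrite Rabs_mult (Rabs_pos_eq a) in H3; last lra.
have H4 : a * Rabs (p i) <= a * M by apply: Rmult_le_compat_l; lra.
lra.
Qed.

Lemma F_lattice d (V : seq (zpoint d)) f w a s :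
  is_Flt d f -> is_width (conv_hull V) w -> 0 < a -> f < a * w ->
  (exists x, conv_hull V x) ->
  exists z : zpoint d, img (conv_hull V) a s (zvec z).
Proof.
move=> [Hub _] Hw Ha Hf [x0 Hx0].
case: (classic (exists z : zpoint d, img (conv_hull V) a s (zvec z))) => // Hn.
exfalso.
have : Flt_set d (a * w).
  exists (img (conv_hull V) a s); split; [|split; [|split; [|split; [|split]]]].
  - by exists (fun i => a * x0 i + s i), x0.
  - apply: img_closed => //; [exact: conv_closed | exact: conv_ext].
  - apply: img_bounded => //; exact: conv_bounded.
  - apply: img_convex; [exact: conv_convex | exact: conv_ext].
  - move=> x Hx [z Hz]; apply: Hn; exists z; apply: img_ext Hx => i; by rewrite Hz.
  - exact: width_img.
move/Hub; lra.
Qed.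


Definition Gs d (P : rpoint d -> Prop) (z : zpoint d) : Prop :=
  exists L : seq (Z * zpoint d),
      (forall q, List.In q L -> P (zvec q.2)) /\
      \big[Z.add/0%Z]_(q <- L) q.1 = 1%Z /\
      forall i, z i = \big[Z.add/0%Z]_(q <- L) (q.1 * q.2 i)%Z.

Lemma G1 d (P : rpoint d -> Prop) y : P (zvec y) -> Gs P y.
Proof.
move=> Hy; exists [:: (1%Z, y)]; split; [|split].
- by move=> q [<-|[]].
- by rewrite big_cons big_nil.
- move=> i; rewrite big_cons big_nil; cbn [fst snd]; lia.
Qed.

Lemma G2 d (P : rpoint d -> Prop) g g' y y' :
  Gs P g -> P (zvec y) -> P (zvec y') -> (forall i, g' i = g i + y' i - y i)%Z -> Gs P g'.
Proof.
move=> [L [H1 [H2 H3]]] Hy Hy' E.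
exists [:: (1%Z, y'), ((-1)%Z, y) & L]; split; [|split].
- move=> q [<-|[<-|]] //; exact: H1.
- rewrite !big_cons H2; cbn [fst snd]; lia.
- move=> i; rewrite !big_cons -H3 E; cbn [fst snd]; lia.
Qed.

Lemma conv3 d (V : seq (zpoint d)) p q r x :
  conv_hull V p -> conv_hull V q -> conv_hull V r ->
  (forall i, x i = 3/8 * p i + 3/8 * q i + 1/4 * r i) -> conv_hull V x.
Proof.
move=> Hp Hq Hr E.
have Hm := @conv_convex _ V q r (3/5) Hq Hr ltac:(lra).
have := @conv_convex _ V p _ (3/8) Hp Hm ltac:(lra).
apply: conv_ext => i /=; rewrite E; field.
Qed.

Lemma K_step d (V : seq (zpoint d)) f w (t : zpoint d) a b c e s :
  is_Flt d f -> is_width (conv_hull V) w -> f < 3/8 * w ->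
  conv_hull V a -> conv_hull V b -> conv_hull V c -> conv_hull V e -> 0 <= s <= 1/4 ->
  (forall i, IZR (t i) = 3/8 * (a i - b i) + s * (c i - e i)) ->
  exists y : zpoint d, conv_hull V (zvec y) /\ conv_hull V (zvec (fun i => (y i + t i)%Z)).
Proof.
move=> Hf Hw Hfw Ha Hb Hc He Hs Et.
have Hc' := @conv_convex _ V c e (4 * s) Hc He ltac:(lra).
case: (@F_lattice _ V f w (3/8) (fun i => 3/8 * b i + 1/4 * e i) Hf Hw ltac:(lra) Hfw (ex_intro _ a Ha)).
move=> y [p [Hp Ep]]; exists y; split.
- apply: (conv3 Hp Hb He) => i; rewrite Ep /=; ring.
- apply: (conv3 Hp Ha Hc') => i; rewrite /zvec plus_IZR Et.
  have := Ep i; rewrite /zvec /= => ->; lra.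
Qed.

Inductive Reach d (P : rpoint d -> Prop) : rpoint d -> Prop :=
| Reach0 D : (forall i, D i = 0) -> Reach P D
| ReachS D D' c e s : Reach P D -> P c -> P e -> 0 <= s <= 1/4 ->
    (forall i, D' i = D i + s * (c i - e i)) -> Reach P D'.

Lemma Reach_ext d (P : rpoint d -> Prop) D D' :
  Reach P D -> (forall i, D i = D' i) -> Reach P D'.
Proof.
case=> [D0 H0 | D0 D1 c e s HR Hc He Hs E] E'.
- apply: Reach0 => i; rewrite -E'; exact: H0.
- apply: (ReachS HR Hc He Hs) => i; rewrite -E'; exact: E.
Qed.

Lemma chain d (V : seq (zpoint d)) f w D :
  is_Flt d f -> is_width (conv_hull V) w -> f < 3/8 * w ->
  Reach (conv_hull V) D ->
  forall x za zb g,
    img (conv_hull V) (3/8) x (zvec za) ->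
    img (conv_hull V) (3/8) (fun i => x i + D i) (zvec zb) ->
    Gs (conv_hull V) g -> Gs (conv_hull V) (fun i => (g i + zb i - za i)%Z).
Proof.
move=> Hf Hw Hfw; elim=> [D0 H0 | D0 D1 c e s HR IH Hc He Hs E] x za zb g
  [pa [Hpa Ea]] [pb [Hpb Eb]] Hg.
- case: (@K_step _ V f w (fun i => (zb i - za i)%Z) pb pa pa pa 0 Hf Hw Hfw Hpb Hpa Hpa Hpa ltac:(lra)).
    move=> i; rewrite minus_IZR; have := Ea i; have := Eb i; have := H0 i; rewrite /zvec.
    move=> -> -> ->; ring.
  move=> y [Hy1 Hy2]; apply: (G2 Hg Hy1 Hy2) => i /=; lia.
- case: (@F_lattice _ V f w (3/8) (fun i => x i + D0 i) Hf Hw ltac:(lra) Hfw (ex_intro _ pa Hpa)).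
  move=> zm Hzm.
  have Hg1 := IH x za zm g (ex_intro _ pa (conj Hpa Ea)) Hzm Hg.
  case: Hzm => pm [Hpm Em].
  case: (@K_step _ V f w (fun i => (zb i - zm i)%Z) pb pm c e s Hf Hw Hfw Hpb Hpm Hc He Hs).
    move=> i; rewrite minus_IZR; have := Em i; have := Eb i; have := E i; rewrite /zvec.
    move=> -> -> ->; ring.
  move=> y [Hy1 Hy2]; apply: (G2 Hg1 Hy1 Hy2) => i /=; lia.
Qed.

Lemma Reach_iter d (P : rpoint d -> Prop) D c e s n :
  Reach P D -> P c -> P e -> 0 <= s <= 1/4 ->
  Reach P (fun i => D i + INR n * s * (c i - e i)).
Proof.
move=> HR Hc He Hs; elim: n => [|n IH].
  apply: (Reach_ext HR) => i /=; ring.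
apply: (ReachS IH Hc He Hs) => i; rewrite S_INR; ring.
Qed.

Lemma Reach_add d (P : rpoint d -> Prop) D D' c e r :
  Reach P D -> P c -> P e -> 0 <= r ->
  (forall i, D' i = D i + r * (c i - e i)) -> Reach P D'.
Proof.
move=> HR Hc He Hr E.
case: (archimed_cor1 (/ (4 * r + 1))); first by apply: Rinv_0_lt_compat; lra.
move=> N [HN1 HN2].
have HN : 0 < INR N by apply: lt_0_INR.
have HN3 : 4 * r + 1 < INR N.
  apply: Rnot_le_lt => H; have := Rinv_le_contravar _ _ HN H; lra.
have Hs : 0 <= r / INR N <= 1/4.
  split; first by apply: Rmult_le_pos => //; left; apply: Rinv_0_lt_compat.
  apply: (Rmult_le_reg_r (INR N)) => //.
  rewrite /Rdiv Rmult_assoc Rinv_l; lra.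
apply: Reach_ext (Reach_iter N HR Hc He Hs) _ => i; rewrite E; field; lra.
Qed.

Local Open Scope ring_scope.
Local Open Scope R_scope.

Lemma sumRE n (F : 'I_n -> R) : \big[@GRing.add R/@GRing.zero R]_(i < n) F i = \big[Rplus/0]_(i < n) F i.
Proof. by []. Qed.

Lemma sum_sub n (F G : 'I_n -> R) :
  \big[Rplus/0]_(i < n) (F i - G i) = \big[Rplus/0]_(i < n) F i - \big[Rplus/0]_(i < n) G i.
Proof.
rewrite /Rminus big_split /=; congr Rplus.
apply: (big_ind2 (fun a b => a = - b)); [lra | move=> *; lra | by []].
Qed.

Lemma conv_lin d (V : seq (zpoint d)) (a : rpoint d) c x :
  (forall j, (j < size V)%nat -> \big[Rplus/0]_(i < d) (a i * IZR (vtx V j i)) = c) ->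
  conv_hull V x -> \big[Rplus/0]_(i < d) (a i * x i) = c.
Proof.
move=> H [l [h1 [h2 h3]]].
have E : \big[Rplus/0]_(i < d) (a i * x i) =
   \big[Rplus/0]_(i < d) \big[Rplus/0]_(j < size V) (l j * (a i * IZR (vtx V j i))).
  apply: eq_bigr => i _; rewrite h3 big_distrr /=; apply: eq_bigr => j _; rewrite /vtx; ring.
rewrite E exchange_big /=.
transitivity (\big[Rplus/0]_(j < size V) (l j * c)).
  apply: eq_bigr => j _; rewrite -big_distrr /= H //.
by rewrite -big_distrl /= h2 Rmult_1_l.
Qed.

Lemma span_fd d (V : seq (zpoint d)) j0 : (j0 < size V)%nat -> full_dim (conv_hull V) ->
  forall v : rpoint d, exists u : nat -> R, forall i,
    v i = \big[Rplus/0]_(j < size V) (u j * (IZR (vtx V j i) - IZR (vtx V j0 i))).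
Proof.
move=> Hj0 Hfd v.
pose n := size V.
pose A : 'M[R]_(n, d) := \matrix_(j < n, i < d) (IZR (vtx V j i) - IZR (vtx V j0 i)).
have Hker : kermx A^T = GRing.zero.
  apply/matrixP => k i0; rewrite [RHS]mxE.
  pose r := row k (kermx A^T).
  have Hr : r *m A^T = @GRing.zero _ by rewrite /r -row_mul mulmx_ker row0.
  pose rr : rpoint d := fun i => r ord0 i.
  have Hc : forall j, (j < size V)%nat ->
      \big[Rplus/0]_(i < d) (rr i * IZR (vtx V j i)) =
      \big[Rplus/0]_(i < d) (rr i * IZR (vtx V j0 i)).
    move=> j Hj.
    have := congr1 (fun M : 'M_(1, n) => M ord0 (Ordinal Hj)) Hr.
    rewrite /= !mxE sumRE => H0.
    have H0' : \big[Rplus/0]_(i < d) (rr i * (IZR (vtx V j i) - IZR (vtx V j0 i))) = 0.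
      transitivity (\big[Rplus/0]_(i < d) (r ord0 i * A^T i (Ordinal Hj))%R); last exact: H0.
      by apply: eq_bigr => i _; rewrite [A^T _ _]mxE [A _ _]mxE.
    apply: Rminus_diag_uniq; rewrite -[RHS]H0'.
    rewrite -sum_sub; apply: eq_bigr => i _; ring.
  have E0 : kermx A^T k i0 = rr i0 by rewrite /rr /r [in RHS]mxE.
  rewrite E0; apply: (Hfd rr) => x y Hx Hy.
  rewrite (conv_lin Hc Hx) //.
  symmetry; apply: (conv_lin _ Hy) => j Hj; exact: Hc.
have Hfull : row_full A.
  rewrite /row_full -mxrank_tr.
  have : row_free A^T by rewrite -kermx_eq0 Hker.
  by rewrite /row_free.
have := submx_full (\row_i v i) Hfull.
case/submxP => Dm EDm.
exists (fun j => Dm ord0 (insubd (Ordinal Hj0) j)) => i.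
have := congr1 (fun M : 'M_(1, d) => M ord0 i) EDm.
rewrite /= !mxE sumRE => ->.
apply: eq_bigr => j _; by rewrite valKd mxE.
Qed.

Local Close Scope ring_scope.
Local Open Scope R_scope.


Lemma width_pos d (V : seq (zpoint d)) w :
  full_dim (conv_hull V) -> is_width (conv_hull V) w -> 0 < w.
Proof.
move=> Hfd [[u [[i Hui] [[x [y [Hx [Hy Hw]]]] Hub]]] _].
apply: Rnot_le_lt => Hle.
apply: Hui; apply: eq_IZR.
apply: (Hfd (fun i => IZR (u i))) => x' y' Hx' Hy'.
have := Hub _ (ex_intro _ x' (ex_intro _ y' (conj Hx' (conj Hy' erefl)))).
have := Rabs_pos (lfun u x' - lfun u y').
rewrite /lfun => H1 H2.
apply: Rminus_diag_uniq; apply: NNPP => Hn; have := Rabs_pos_lt _ Hn; lra.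
Qed.

Lemma G_ext d (P : rpoint d -> Prop) g g' :
  Gs P g -> (forall i, g i = g' i) -> Gs P g'.
Proof. move=> [L [H1 [H2 H3]]] E; exists L; split => //; split => // i; rewrite -E; exact: H3. Qed.

Lemma Reach_sum d (V : seq (zpoint d)) (u : nat -> R) m :
  (0 < size V)%nat -> (m <= size V)%nat ->
  Reach (conv_hull V) (fun i => \big[Rplus/0]_(j < m) (u j * (IZR (vtx V j i) - IZR (vtx V 0 i)))).
Proof.
move=> H0; elim: m => [|m IH] Hm.
  by apply: Reach0 => i; rewrite big_ord0.
have Hm' : (m < size V)%nat by [].
have HR := IH (ltnW Hm').
have Hv := conv_vertex Hm'.
have Hp := conv_vertex H0.
case: (Rle_lt_dec 0 (u m)) => Hu.
- apply: (Reach_add HR Hv Hp Hu) => i; rewrite big_ord_recr /=; by [].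
- apply: (@Reach_add _ _ _ _ _ _ (- u m) HR Hp Hv); first lra.
  move=> i; rewrite big_ord_recr /= /zvec; ring.
Qed.

Lemma V_nonempty d (V : seq (zpoint d)) :
  (1 <= d)%nat -> full_dim (conv_hull V) -> (0 < size V)%nat.
Proof.
move=> Hd Hfd; case: V Hfd => [|v V] Hfd //.
exfalso.
have := Hfd (fun _ => 1) _ (Ordinal Hd).
have H : forall x : rpoint d, ~ conv_hull [::] x.
  move=> x [l [_ [H _]]]; rewrite big_ord0 in H; lra.
move=> H1; have : (1 = 0) by apply: H1 => x y Hx; case: (H x Hx).
lra.
Qed.

Lemma main_d2 d (V : seq (zpoint d)) f w :
  (2 <= d)%nat -> full_dim (conv_hull V) -> is_Flt d f ->
  is_width (conv_hull V) w -> 2 * f * INR d <= w -> spanning (conv_hull V).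
Proof.
move=> Hd Hfd Hf Hw Hfw z.
have H0 : (0 < size V)%nat by apply: V_nonempty => //; exact: ltnW.
have Hwp := width_pos Hfd Hw.
have Hd2 : 2 <= INR d by apply: (le_INR 2); apply/leP.
have Hf38 : f < 3/8 * w.
  case: (Rle_lt_dec f 0) => Hf0; first lra.
  nra.
pose p0 := vtx V 0.
have Hp0 : conv_hull V (zvec p0) := conv_vertex H0.
case: (@span_fd _ V 0%nat H0 Hfd (fun i => IZR (z i) - IZR (p0 i))) => u Hu.
have HR : Reach (conv_hull V) (fun i => IZR (z i) - IZR (p0 i)).
  apply: Reach_ext (Reach_sum u H0 (leqnn _)) _ => i; by rewrite Hu.
case: (@F_lattice _ V f w (3/8) (fun _ => 0) Hf Hw ltac:(lra) Hf38 (ex_intro _ _ Hp0)).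
move=> za [pa [Hpa Ea]].
pose zb := fun i => (za i + z i - p0 i)%Z.
have Hzb : img (conv_hull V) (3/8) (fun i => 0 + (IZR (z i) - IZR (p0 i))) (zvec zb).
  exists pa; split => // i; rewrite /zvec /zb minus_IZR plus_IZR.
  have := Ea i; rewrite /zvec => ->; ring.
have := chain Hf Hw Hf38 HR (ex_intro _ pa (conj Hpa Ea)) Hzb (G1 Hp0).
move=> HG; apply: (G_ext HG) => i; rewrite /zb; lia.
Qed.


Lemma I1 (i : 'I_1) : i = ord0.
Proof. by apply: val_inj; case: i => [[|m]]. Qed.

Lemma d1_aux (V : seq (zpoint 1)) (lo hi : zpoint 1) :
  conv_hull V (zvec lo) -> conv_hull V (zvec hi) -> (lo ord0 < hi ord0)%Z ->
  spanning (conv_hull V).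
Proof.
move=> Hlo Hhi Hlt z.
have Hlt' : IZR (lo ord0) < IZR (hi ord0) by apply: IZR_lt.
pose t := / (IZR (hi ord0) - IZR (lo ord0)).
have Ht : 0 <= t <= 1.
  have Hle : 1 <= IZR (hi ord0) - IZR (lo ord0) by rewrite -minus_IZR; apply: IZR_le; lia.
  split; first by left; apply: Rinv_0_lt_compat; lra.
  rewrite /t -Rinv_1; apply: Rinv_le_contravar; lra.
have Hlo1 : conv_hull V (zvec (fun i => (lo i + 1)%Z)).
  have := conv_convex Hhi Hlo Ht; apply: conv_ext => i; rewrite (I1 i) /zvec plus_IZR /t.
  field; lra.
have Q : forall k, Gs (conv_hull V) (fun i => (lo i + k)%Z).
  apply: Z.peano_ind.
  - apply: G_ext (G1 Hlo) _ => i; lia.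
  - move=> k Hk; apply: (G2 Hk Hlo Hlo1) => i; lia.
  - move=> k Hk; apply: (G2 Hk Hlo1 Hlo) => i; lia.
apply: G_ext (Q (z ord0 - lo ord0)%Z) _ => i; rewrite (I1 i); lia.
Qed.

Lemma main_d1 (V : seq (zpoint 1)) : full_dim (conv_hull V) -> spanning (conv_hull V).
Proof.
move=> Hfd.
have H0 := V_nonempty (leqnn 1) Hfd.
pose p0 := vtx V 0.
have Hp0 : conv_hull V (zvec p0) := conv_vertex H0.
have [j [Hj Hne]] : exists j, (j < size V)%nat /\ vtx V j ord0 <> p0 ord0.
  apply: NNPP => Hn.
  have Hall : forall j, (j < size V)%nat -> vtx V j ord0 = p0 ord0.
    move=> j Hj; apply: NNPP => Hne; apply: Hn; by exists j.
  have Hc : forall j, (j < size V)%nat ->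
      \big[Rplus/0]_(i < 1) ((fun _ => 1) i * IZR (vtx V j i)) = IZR (p0 ord0).
    move=> j Hj; rewrite big_ord1 Hall //; ring.
  have := Hfd (fun _ => 1) _ ord0.
  have H : 1 = 0 -> False by lra.
  move=> H1; apply: H; apply: H1 => x y Hx Hy.
  by rewrite (conv_lin Hc Hx) (conv_lin Hc Hy).
have Hq := conv_vertex Hj.
case: (Z_lt_le_dec (vtx V j ord0) (p0 ord0)) => Hlt.
- exact: (d1_aux Hq Hp0 Hlt).
- apply: (d1_aux Hp0 Hq); lia.
Qed.

Unset Implicit Arguments.

Theorem corollary2p5 (d : nat) (V : seq (zpoint d)) :
  (1 <= d)%nat ->
  full_dim (conv_hull V) ->
  (exists f w, is_Flt d f /\ is_width (conv_hull V) w /\ 2 * f * INR d <= w) ->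
  spanning (conv_hull V).
Proof.
move=> Hd Hfd [f [w [Hf [Hw Hfw]]]].
case: (leqP 2 d) => Hd2.
  exact: (main_d2 Hd2 Hfd Hf Hw Hfw).
have Ed : d = 1%nat by apply/eqP; rewrite eqn_leq -ltnS Hd2 Hd.
subst d; exact: main_d1.
Qed.
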